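(* Every purely resolving class of left $R$-modules is a special F-class.
   Context: $R$ is a ring with $1$; modules are left $R$-modules. pp formulas and $\phi(M)$ as usual; $\phi\le\psi$ means $\phi(N)\subseteq\psi(N)$ for all modules $N$, and for a class $\mathcal F$, $\phi\le_{\mathcal F}\psi$ means $\phi(F)\subseteq\psi(F)$ for all $F\in\mathcal F$. An F-sentence is an implication $\phi\to\bigvee_{i\in I}\phi_i$ where $\phi$ and all $\phi_i$ are pp formulas in the same finitely many free variables, $I$ may be infinite, and the family $(\phi_i)$ is closed under finite sums (a module satisfies it iff every tuple in $\phi(M)$ lies in some $\phi_i(M)$). An F-class is a class of modules axiomatized by a set of F-sentences. An F-sentence is in standard form if $\phi_i\le\phi$ for all $i$. An F-class $\mathcal F$ is special if it has an axiomatization by F-sentences in standard form containing exactly one axiom with premise $\phi$ for each pp formula $\phi$, such that for any two axioms $\phi\to\bigvee_i\phi_i$ and $\psi\to\bigvee_j\psi_j$ of it, $\phi\le_{\mathcal F}\psi$ holds only if for every $i$ there is $j$ with $\phi_i\le\psi_j$. A module is purely generated by a class $\mathcal B$ if it is a pure-epimorphic image of a direct sum of modules from $\mathcal B$; $\mathrm{PGen}\,\mathcal B$ is the class of all such modules; a class is purely resolving if it equals $\mathrm{PGen}\,\mathcal B$ for some class $\mathcal B$ of pure-projective modules closed under finite direct sums. *)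

(* Defs.v *)
From HB Require Import structures.
From mathcomp Require Import all_boot all_order all_algebra.
Set Implicit Arguments. Unset Strict Implicit. Unset Printing Implicit Defensive.
Import GRing.Theory.
Local Open Scope ring_scope.

Section PP.
Variable R : pzRingType.

Definition modclass := lmodType R -> Prop.

(* A pp formula in n free variables: exists y (of length m), A x + B y = 0,
   a system of k linear equations. *)
Record ppf (n : nat) := PPF {
  pp_k : nat; pp_m : nat;
  pp_A : 'M[R]_(pp_k, n); pp_B : 'M[R]_(pp_k, pp_m) }.

Definition ppsat n (phi : ppf n) (M : lmodType R) (x : 'I_n -> M) : Prop :=
  exists y : 'I_(pp_m phi) -> M, forall r : 'I_(pp_k phi),
    \sum_(j < n) pp_A phi r j *: x j + \sum_(l < pp_m phi) pp_B phi r l *: y l = 0.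

Definition pp_le n (phi psi : ppf n) : Prop :=
  forall (M : lmodType R) (x : 'I_n -> M), ppsat phi x -> ppsat psi x.

Definition pp_leF (F : modclass) n (phi psi : ppf n) : Prop :=
  forall (M : lmodType R), F M -> forall x : 'I_n -> M, ppsat phi x -> ppsat psi x.

Definition pp_is_sum n (chi phi psi : ppf n) : Prop :=
  forall (M : lmodType R) (x : 'I_n -> M),
    ppsat chi x <-> exists x1 x2 : 'I_n -> M,
      (forall j, x j = x1 j + x2 j) /\ ppsat phi x1 /\ ppsat psi x2.

(* The conclusion of an F-sentence: a family of pp formulas (phi_i)_{i in I},
   closed under (finite) sums. *)
Record Fconcl (n : nat) := FConcl {
  fc_I : Type;
  fc_fam : fc_I -> ppf n;
  fc_closed : forall i j : fc_I, exists k : fc_I,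
      pp_is_sum (fc_fam k) (fc_fam i) (fc_fam j) }.
Arguments fc_fam {n} f _.

Definition Fsat n (phi : ppf n) (C : Fconcl n) (M : lmodType R) : Prop :=
  forall x : 'I_n -> M, ppsat phi x -> exists i : fc_I C, ppsat (fc_fam C i) x.

(* F is a special F-class: axiomatized by F-sentences in standard form,
   exactly one for each pp formula phi (namely phi -> \/ ax phi), such that
   phi <=_F psi implies every phi_i lies below some psi_j. *)
Definition special_Fclass (F : modclass) : Prop :=
  exists ax : forall n (phi : ppf n), Fconcl n,
    (forall n (phi : ppf n) (i : fc_I (ax n phi)), pp_le (fc_fam (ax n phi) i) phi)
    /\ (forall M : lmodType R, F M <-> forall n (phi : ppf n), Fsat phi (ax n phi) M)
    /\ (forall n (phi psi : ppf n), pp_leF F phi psi ->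
          forall i : fc_I (ax n phi), exists j : fc_I (ax n psi),
            pp_le (fc_fam (ax n phi) i) (fc_fam (ax n psi) j)).

Definition is_dsum (I : Type) (B : I -> lmodType R) (S : lmodType R)
    (iota : forall i, {linear B i -> S}) : Prop :=
  forall (N : lmodType R) (f : forall i, {linear B i -> N}),
    (exists g : {linear S -> N}, forall i, (g \o iota i) =1 f i)
    /\ (forall g1 g2 : {linear S -> N},
          (forall i, (g1 \o iota i) =1 f i) -> (forall i, (g2 \o iota i) =1 f i) ->
          g1 =1 g2).

(* pure epimorphism: surjective, with pure kernel (every finite system of
   linear equations with parameters in Ker p solvable in S is solvable in Ker p) *)
Definition pure_epi (S M : lmodType R) (p : {linear S -> M}) : Prop :=
  (forall m : M, exists s : S, p s = m)
  /\ (forall n (phi : ppf n) (x : 'I_n -> S), (forall j, p (x j) = 0) ->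
        ppsat phi x ->
        exists y : 'I_(pp_m phi) -> S, (forall l, p (y l) = 0) /\
          forall r : 'I_(pp_k phi),
            \sum_(j < n) pp_A phi r j *: x j + \sum_(l < pp_m phi) pp_B phi r l *: y l = 0).

Definition pure_projective (P : lmodType R) : Prop :=
  forall (S M : lmodType R) (p : {linear S -> M}), pure_epi p ->
    forall f : {linear P -> M}, exists g : {linear P -> S}, (p \o g) =1 f.

Definition PGen (B : modclass) : modclass := fun M =>
  exists (I : Type) (Bi : I -> lmodType R) (S : lmodType R)
         (iota : forall i, {linear Bi i -> S}),
    (forall i, B (Bi i)) /\ is_dsum iota /\
    exists p : {linear S -> M}, pure_epi p.

(* closed under finite direct sums (binary ones suffice, by induction) *)
Definition closed_fin_dsum (B : modclass) : Prop :=
  forall (Bi : bool -> lmodType R) (S : lmodType R)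
         (iota : forall i, {linear Bi i -> S}),
    (forall i, B (Bi i)) -> is_dsum iota -> B S.

Definition purely_resolving (F : modclass) : Prop :=
  exists B : modclass,
    (forall P, B P -> pure_projective P) /\ closed_fin_dsum B /\
    (forall M, F M <-> PGen B M).

End PP.

(* Main.v *)
Require Import Defs.
From HB Require Import structures.
From mathcomp Require Import all_boot all_order all_algebra.
From mathcomp Require Import boolp.
Import GRing.Theory.
Local Open Scope ring_scope.

Set Implicit Arguments. Unset Strict Implicit. Unset Printing Implicit Defensive.


Section DS.
Variables (R : pzRingType) (J : Type) (X : J -> lmodType R).
Definition cJ := {classic J}.
Definition finsupp (f : forall j, X j) : Prop :=
  exists s : seq cJ, forall j : cJ, j \notin s -> f j = 0.

Record dsum := DSum { dfun : forall j, X j; dfunP : `[< finsupp dfun >] }.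
HB.instance Definition _ := [isSub for dfun].
HB.instance Definition _ := [Choice of dsum by <:].

Lemma dsumE (f g : dsum) : (forall j, dfun f j = dfun g j) -> f = g.
Proof. by move=> h; apply: val_inj; apply: functional_extensionality_dep. Qed.

Lemma fs0 : `[< finsupp (fun j => 0) >].
Proof. by apply/asboolP; exists [::]. Qed.
Definition ds0 := DSum fs0.

Lemma fsadd (f g : dsum) : `[< finsupp (fun j => dfun f j + dfun g j) >].
Proof.
apply/asboolP; have [s hs] := asboolW (dfunP f); have [t ht] := asboolW (dfunP g).
exists (s ++ t) => j; rewrite mem_cat negb_or => /andP[js jt].
by rewrite hs // ht // addr0.
Qed.
Definition dsadd f g := DSum (fsadd f g).

Lemma fsopp (f : dsum) : `[< finsupp (fun j => - dfun f j) >].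
Proof.
apply/asboolP; have [s hs] := asboolW (dfunP f).
by exists s => j js; rewrite hs // oppr0.
Qed.
Definition dsopp f := DSum (fsopp f).

Lemma fsscale a (f : dsum) : `[< finsupp (fun j => a *: dfun f j) >].
Proof.
apply/asboolP; have [s hs] := asboolW (dfunP f).
by exists s => j js; rewrite hs // scaler0.
Qed.
Definition dsscale a f := DSum (fsscale a f).

Lemma dsaddA : associative dsadd.
Proof. by move=> f g h; apply: dsumE => j /=; rewrite addrA. Qed.
Lemma dsaddC : commutative dsadd.
Proof. by move=> f g; apply: dsumE => j /=; rewrite addrC. Qed.
Lemma dsadd0 : left_id ds0 dsadd.
Proof. by move=> f; apply: dsumE => j /=; rewrite add0r. Qed.
Lemma dsaddN : left_inverse ds0 dsopp dsadd.
Proof. by move=> f; apply: dsumE => j /=; rewrite addNr. Qed.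
HB.instance Definition _ := GRing.isZmodule.Build dsum dsaddA dsaddC dsadd0 dsaddN.

Lemma dsscaleA a b (v : dsum) : dsscale a (dsscale b v) = dsscale (a * b) v.
Proof. by apply: dsumE => j /=; rewrite scalerA. Qed.
Lemma dsscale1 : left_id 1 dsscale.
Proof. by move=> v; apply: dsumE => j /=; rewrite scale1r. Qed.
Lemma dsscaleDr : right_distributive dsscale +%R.
Proof. by move=> a u v; apply: dsumE => j /=; rewrite scalerDr. Qed.
Lemma dsscaleDl (v : dsum) : {morph dsscale^~ v: a b / a + b}.
Proof. by move=> a b; apply: dsumE => j /=; rewrite scalerDl. Qed.
HB.instance Definition _ := GRing.Zmodule_isLmodule.Build R dsum
  dsscaleA dsscale1 dsscaleDr dsscaleDl.

Definition dcoord (j : J) (f : dsum) : X j := dfun f j.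
Lemma coord_lin (j : J) : linear (dcoord j).
Proof. by []. Qed.
HB.instance Definition _ (j : J) := GRing.isLinear.Build R dsum (X j) *:%R (dcoord j) (coord_lin j).

Lemma coordP (j : J) a (u v : dsum) : dcoord j (a *: u + v) = a *: dcoord j u + dcoord j v.
Proof. by []. Qed.
Lemma coordE (j : J) (f : dsum) : dcoord j f = dfun f j. Proof. by []. Qed.

Lemma dsumE' (f g : dsum) : (forall j, dcoord j f = dcoord j g) -> f = g.
Proof. exact: dsumE. Qed.

Definition dsupp (f : dsum) : seq cJ :=
  [seq j <- undup (projT1 (cid (asboolW (dfunP f)))) | dcoord j f != 0].

Lemma dsupp_uniq f : uniq (dsupp f).
Proof. by apply: filter_uniq; apply: undup_uniq. Qed.

Lemma mem_dsupp f (j : cJ) : (j \in dsupp f) = (dcoord j f != 0).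
Proof.
rewrite mem_filter mem_undup; case: (cid _) => s /= hs.
case: (boolP (dcoord j f != 0)) => //= nz; apply/negPn/negP => js.
by move: nz; rewrite /dcoord hs // eqxx.
Qed.

Definition inj_fun (j : J) (x : X j) : forall k, X k :=
  fun k => match pselect (j = k) with left e => eq_rect j X x k e | right _ => 0 end.

Lemma inj_funP (j : J) (x : X j) : `[< finsupp (inj_fun x) >].
Proof.
apply/asboolP; exists [:: (j : cJ)] => k; rewrite inE => /eqP nk.
by rewrite /inj_fun; case: pselect => // e; case: nk.
Qed.
Definition dinj j (x : X j) : dsum := DSum (inj_funP x).

Lemma coord_dinj_eq (j : J) (x : X j) : dcoord j (dinj x) = x.
Proof.
rewrite /dcoord /= /inj_fun; case: pselect => // e.
by rewrite (Prop_irrelevance e erefl).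
Qed.
Lemma coord_dinj_neq (j k : J) (x : X j) : j <> k -> dcoord k (dinj x) = 0.
Proof. by move=> nk; rewrite /dcoord /= /inj_fun; case: pselect. Qed.

Lemma dinj_lin (j : J) : linear (@dinj j).
Proof.
move=> a x y; apply: dsumE' => k; rewrite coordP.
have [<-|nk] := pselect (j = k).
  by rewrite !coord_dinj_eq.
by rewrite !coord_dinj_neq // scaler0 addr0.
Qed.
HB.instance Definition _ (j : J) := GRing.isLinear.Build R (X j) dsum *:%R (@dinj j) (@dinj_lin j).

Lemma coord_sum k (s : seq cJ) (F : cJ -> dsum) :
  dcoord k (\sum_(j <- s) F j) = \sum_(j <- s) dcoord k (F j).
Proof. by rewrite linear_sum. Qed.

Lemma ds_decomp (f : dsum) (s : seq cJ) : uniq s ->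
  (forall j : cJ, dcoord j f != 0 -> j \in s) ->
  f = \sum_(j <- s) dinj (dcoord j f).
Proof.
move=> us hs; apply: dsumE' => k; rewrite coord_sum.
case: (boolP ((k : cJ) \in s)) => ks.
  rewrite (bigD1_seq (k : cJ)) // coord_dinj_eq big1 => [|j /eqP nj]; first by rewrite Monoid.mulm1.
  by rewrite coord_dinj_neq // => e; apply: nj.
rewrite big1_seq; last first.
  move=> j js; rewrite coord_dinj_neq // => e; move: js; rewrite e.
  by rewrite (negbTE ks).
by apply/eqP; apply: contraNT ks => /hs.
Qed.

Section Map.
Variables (N : lmodType R) (F : forall j, {linear X j -> N}).
Definition dmap (f : dsum) : N := \sum_(j <- dsupp f) F j (dcoord j f).

Lemma dmap_seq (f : dsum) (s : seq cJ) : uniq s ->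
  (forall j : cJ, dcoord j f != 0 -> j \in s) ->
  dmap f = \sum_(j <- s) F j (dcoord j f).
Proof.
move=> us hs; rewrite /dmap.
rewrite [RHS](bigID (fun j : cJ => dcoord j f != 0)) /=.
rewrite [X in _ = _ + X]big1 ?addr0; last first.
  by move=> j /negPn/eqP ->; rewrite linear0.
rewrite -[RHS]big_filter; apply: perm_big; apply: uniq_perm.
- exact: dsupp_uniq.
- exact: filter_uniq.
move=> j; have := mem_dsupp f j; rewrite /dsupp => ->; rewrite mem_filter.
by case: (boolP (dcoord j f != 0)) => //= /hs ->.
Qed.

Lemma dmap_lin : linear dmap.
Proof.
move=> a f g.
set s := undup (dsupp f ++ dsupp g).
have us : uniq s by exact: undup_uniq.
have hf : forall j : cJ, dcoord j f != 0 -> j \in s.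
  by move=> j; rewrite -mem_dsupp mem_undup mem_cat => ->.
have hg : forall j : cJ, dcoord j g != 0 -> j \in s.
  by move=> j; rewrite -mem_dsupp mem_undup mem_cat orbC => ->.
rewrite (dmap_seq us hf) (dmap_seq us hg) (dmap_seq (f := a *: f + g) us).
  rewrite scaler_sumr -big_split /=; apply: eq_bigr => j _.
  by rewrite !linearP.
move=> j; rewrite coordP; apply: contraR => h.
have /negPn/eqP -> : ~~ (dcoord j f != 0) by apply: contra h; apply: hf.
have /negPn/eqP -> : ~~ (dcoord j g != 0) by apply: contra h; apply: hg.
by rewrite scaler0 addr0.
Qed.
HB.instance Definition _ := GRing.isLinear.Build R dsum N *:%R dmap dmap_lin.

Lemma dmap_dinj (j : J) (x : X j) : dmap (dinj x) = F j x.
Proof.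
rewrite (dmap_seq (s := [:: (j : cJ)])) //.
  by rewrite big_seq1 coord_dinj_eq.
move=> k; rewrite inE; apply: contraR => /eqP nk.
by rewrite coord_dinj_neq // => e; apply: nk.
Qed.

Lemma dmap_unique (g : {linear dsum -> N}) :
  (forall j (x : X j), g (dinj x) = F j x) -> forall f, g f = dmap f.
Proof.
move=> hg f; rewrite {1}(@ds_decomp f (dsupp f) (dsupp_uniq f)); last first.
  by move=> j; rewrite mem_dsupp.
by rewrite linear_sum /dmap; apply: eq_bigr => j _; rewrite hg.
Qed.
End Map.

End DS.

Set Implicit Arguments. Unset Strict Implicit. Unset Printing Implicit Defensive.


Record subm (R : pzRingType) (V : lmodType R) := Subm {
  sm :> V -> Prop;
  sm0 : sm 0;
  smP : forall a u v, sm u -> sm v -> sm (a *: u + v) }.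

Section Quot.
Variables (R : pzRingType) (V : lmodType R) (U : subm V).
Let U0 : U 0 := sm0 U.
Let UP : forall a u v, U u -> U v -> U (a *: u + v) := @smP _ _ U.

Lemma UD u v : U u -> U v -> U (u + v).
Proof. by move=> hu hv; rewrite -[u]scale1r; apply: UP. Qed.
Lemma UZ a u : U u -> U (a *: u).
Proof. by move=> hu; rewrite -[_ *: _]addr0; apply: UP. Qed.
Lemma UN u : U u -> U (- u).
Proof. by move=> hu; rewrite -scaleN1r; apply: UZ. Qed.
Lemma UB u v : U u -> U v -> U (u - v).
Proof. by move=> hu hv; apply: UD => //; apply: UN. Qed.

Lemma ex_canon (v : V) : exists w, `[< U (w - v) >].
Proof. by exists v; apply/asboolP; rewrite subrr. Qed.
Definition canon (v : V) : V := xchoose (ex_canon v).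
Lemma canon_rel v : U (canon v - v).
Proof. exact: (asboolW (xchooseP (ex_canon v))). Qed.
Lemma canon_eq v w : U (v - w) -> canon v = canon w.
Proof.
move=> h; apply: eq_xchoose => x; apply/asboolP/asboolP => hx.
  by have := UD hx h; rewrite addrA subrK.
by have := UB hx h; rewrite opprB addrA subrK.
Qed.
Lemma canon_id v : canon (canon v) = canon v.
Proof. exact/canon_eq/canon_rel. Qed.

Record quot := Quot { qval : V; qvalP : canon qval == qval }.
HB.instance Definition _ := [isSub for qval].
HB.instance Definition _ := [Choice of quot by <:].

Definition qpi (v : V) : quot := Quot (introT eqP (canon_id v)).
Lemma qpiK (q : quot) : qpi (qval q) = q.
Proof. by apply: val_inj => /=; apply/eqP; case: q. Qed.
Lemma qpi_eq v w : (qpi v = qpi w) <-> U (v - w).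
Proof.
split => [h|h]; last by apply: val_inj => /=; apply: canon_eq.
have : canon v = canon w by move: (congr1 qval h).
move=> e; have := UN (UB (canon_rel v) (canon_rel w)).
by rewrite e opprB opprB addrC addrA subrK.
Qed.
Lemma qval_rel v : U (qval (qpi v) - v).
Proof. exact: canon_rel. Qed.

Definition qadd (q r : quot) := qpi (qval q + qval r).
Definition qopp (q : quot) := qpi (- qval q).
Definition qzero := qpi 0.
Definition qscale a (q : quot) := qpi (a *: qval q).

Lemma qaddE v w : qadd (qpi v) (qpi w) = qpi (v + w).
Proof.
apply/qpi_eq.
have := UD (qval_rel v) (qval_rel w).
by rewrite opprD addrACA.
Qed.
Lemma qoppE v : qopp (qpi v) = qpi (- v).
Proof. by apply/qpi_eq; have := UN (qval_rel v); rewrite opprB opprK addrC. Qed.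
Lemma qscaleE a v : qscale a (qpi v) = qpi (a *: v).
Proof. by apply/qpi_eq; have := UZ a (qval_rel v); rewrite scalerBr. Qed.

Lemma qind (P : quot -> Prop) : (forall v, P (qpi v)) -> forall q, P q.
Proof. by move=> h q; rewrite -(qpiK q). Qed.

Lemma qaddA : associative qadd.
Proof.
by elim/qind => u; elim/qind => v; elim/qind => w; rewrite !qaddE addrA.
Qed.
Lemma qaddC : commutative qadd.
Proof. by elim/qind => u; elim/qind => v; rewrite !qaddE addrC. Qed.
Lemma qadd0 : left_id qzero qadd.
Proof. by elim/qind => u; rewrite /qzero qaddE add0r. Qed.
Lemma qaddN : left_inverse qzero qopp qadd.
Proof. by elim/qind => u; rewrite qoppE qaddE addNr. Qed.
HB.instance Definition _ := GRing.isZmodule.Build quot qaddA qaddC qadd0 qaddN.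

Lemma qscaleA a b (q : quot) : qscale a (qscale b q) = qscale (a * b) q.
Proof. by elim/qind: q => u; rewrite !qscaleE scalerA. Qed.
Lemma qscale1 : left_id 1 qscale.
Proof. by elim/qind => u; rewrite qscaleE scale1r. Qed.
Lemma qscaleDr : right_distributive qscale qadd.
Proof. by move=> a; elim/qind => u; elim/qind => v; rewrite qaddE !qscaleE qaddE scalerDr. Qed.
Lemma qscaleDl (q : quot) : {morph qscale^~ q: a b / a + b >-> qadd a b}.
Proof. by elim/qind: q => u a b; rewrite !qscaleE qaddE scalerDl. Qed.
HB.instance Definition _ := GRing.Zmodule_isLmodule.Build R quot
  qscaleA qscale1 qscaleDr qscaleDl.

Lemma qpi_lin : linear qpi.
Proof.
move=> a u v.
have -> : a *: qpi u + qpi v = qadd (qscale a (qpi u)) (qpi v) by [].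
by rewrite qscaleE qaddE.
Qed.
HB.instance Definition _ := GRing.isLinear.Build R V quot *:%R qpi qpi_lin.

Lemma qpi0 v : (qpi v = 0) <-> U v.
Proof. by rewrite -(linear0 qpi) qpi_eq subr0. Qed.

Section QMap.
Variables (N : lmodType R) (h : {linear V -> N}).
Variable hU : forall u, U u -> h u = 0.
Definition qmap (hU' : forall u, U u -> h u = 0) (q : quot) : N := h (qval q).
Lemma qmap_pi v : qmap hU (qpi v) = h v.
Proof.
by apply/eqP; rewrite -subr_eq0 -linearB; apply/eqP/hU/qval_rel.
Qed.
Lemma qmap_lin : linear (qmap hU).
Proof.
move=> a; elim/qind => u; elim/qind => v.
by rewrite -linearP !qmap_pi linearP.
Qed.
HB.instance Definition _ := GRing.isLinear.Build R quot N *:%R (qmap hU) qmap_lin.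
End QMap.
End Quot.

Set Implicit Arguments. Unset Strict Implicit. Unset Printing Implicit Defensive.


Section PPB.
Variable R : pzRingType.

Definition lc (M : lmodType R) k n (A : 'M[R]_(k, n)) (x : 'I_n -> M) (r : 'I_k) : M :=
  \sum_(j < n) A r j *: x j.

Lemma ppsatE n (phi : ppf R n) (M : lmodType R) (x : 'I_n -> M) :
  ppsat phi x <-> exists y, forall r, lc (pp_A phi) x r + lc (pp_B phi) y r = 0.
Proof. by []. Qed.

Definition pcat (M : Type) a b (x : 'I_a -> M) (y : 'I_b -> M) : 'I_(a + b) -> M :=
  fun l => match split l with inl i => x i | inr i => y i end.

Lemma pcatL (M : Type) a b (x : 'I_a -> M) (y : 'I_b -> M) i : pcat x y (lshift b i) = x i.
Proof.
rewrite /pcat; case: splitP => j /= e; first by congr x; apply: val_inj.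
by have := ltn_ord i; rewrite e ltnNge leq_addr.
Qed.
Lemma pcatR (M : Type) a b (x : 'I_a -> M) (y : 'I_b -> M) i : pcat x y (rshift a i) = y i.
Proof.
rewrite /pcat; case: splitP => j /= e.
  by have := ltn_ord j; rewrite -e ltnNge leq_addr.
by congr y; apply: val_inj; move/eqP: e; rewrite eqn_add2l => /eqP.
Qed.

Lemma lc_row (M : lmodType R) k a b (A : 'M[R]_(k, a)) (B : 'M[R]_(k, b))
    (x : 'I_a -> M) (y : 'I_b -> M) r :
  lc (row_mx A B) (pcat x y) r = lc A x r + lc B y r.
Proof.
rewrite /lc big_split_ord /=; congr (_ + _); apply: eq_bigr => i _.
  by rewrite row_mxEl pcatL.
by rewrite row_mxEr pcatR.
Qed.
Lemma lc_colU (M : lmodType R) k1 k2 n (A : 'M[R]_(k1, n)) (B : 'M[R]_(k2, n)) (x : 'I_n -> M) r :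
  lc (col_mx A B) x (lshift k2 r) = lc A x r.
Proof. by apply: eq_bigr => i _; rewrite col_mxEu. Qed.
Lemma lc_colD (M : lmodType R) k1 k2 n (A : 'M[R]_(k1, n)) (B : 'M[R]_(k2, n)) (x : 'I_n -> M) r :
  lc (col_mx A B) x (rshift k1 r) = lc B x r.
Proof. by apply: eq_bigr => i _; rewrite col_mxEd. Qed.
Lemma lc0 (M : lmodType R) k n (x : 'I_n -> M) r : lc (0 : 'M_(k, n)) x r = 0.
Proof. by apply: big1 => i _; rewrite mxE scale0r. Qed.
Lemma lcN (M : lmodType R) k n (A : 'M_(k, n)) (x : 'I_n -> M) r : lc (- A) x r = - lc A x r.
Proof. by rewrite /lc -sumrN; apply: eq_bigr => i _; rewrite mxE scaleNr. Qed.
Lemma lc1 (M : lmodType R) n (x : 'I_n -> M) r : lc 1%:M x r = x r.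
Proof.
rewrite /lc (bigD1 r) //= big1 => [|i /negbTE nir]; first by rewrite mxE eqxx scale1r addr0.
by rewrite mxE eq_sym nir scale0r.
Qed.
Lemma lc_x0 (M : lmodType R) k n (A : 'M_(k, n)) r : lc A (fun _ => (0 : M)) r = 0.
Proof. by apply: big1 => i _; rewrite scaler0. Qed.
Lemma lcxD (M : lmodType R) k n (A : 'M_(k, n)) (x y : 'I_n -> M) r :
  lc A (fun i => x i + y i) r = lc A x r + lc A y r.
Proof. by rewrite /lc -big_split; apply: eq_bigr => i _; rewrite scalerDr. Qed.
Lemma lcxN (M : lmodType R) k n (A : 'M_(k, n)) (x : 'I_n -> M) r :
  lc A (fun i => - x i) r = - lc A x r.
Proof. by rewrite /lc -sumrN; apply: eq_bigr => i _; rewrite scalerN. Qed.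
Lemma lcxB (M : lmodType R) k n (A : 'M_(k, n)) (x y : 'I_n -> M) r :
  lc A (fun i => x i - y i) r = lc A x r - lc A y r.
Proof. by rewrite lcxD lcxN. Qed.
Lemma lc_lin (M N : lmodType R) (f : {linear M -> N}) k n (A : 'M_(k, n)) (x : 'I_n -> M) r :
  f (lc A x r) = lc A (fun i => f (x i)) r.
Proof. by rewrite /lc linear_sum; apply: eq_bigr => i _; rewrite linearZ. Qed.

Lemma ppsat_lin n (phi : ppf R n) (M N : lmodType R) (f : {linear M -> N}) (x : 'I_n -> M) :
  ppsat phi x -> ppsat phi (fun i => f (x i)).
Proof.
move=> /ppsatE [y hy]; apply/ppsatE; exists (fun l => f (y l)) => r.
by rewrite -!lc_lin -linearD /= hy linear0.
Qed.

Lemma ppsat0 n (phi : ppf R n) (M : lmodType R) : ppsat phi (fun _ => (0 : M)).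
Proof. by apply/ppsatE; exists (fun _ => 0) => r; rewrite !lc_x0 addr0. Qed.

Lemma ppsatD n (phi : ppf R n) (M : lmodType R) (x y : 'I_n -> M) :
  ppsat phi x -> ppsat phi y -> ppsat phi (fun i => x i + y i).
Proof.
move=> /ppsatE [u hu] /ppsatE [v hv]; apply/ppsatE; exists (fun l => u l + v l) => r.
by rewrite !lcxD addrACA hu hv addr0.
Qed.

Lemma ppsat_ext n (phi : ppf R n) (M : lmodType R) (x y : 'I_n -> M) :
  (forall i, x i = y i) -> ppsat phi x -> ppsat phi y.
Proof. by move=> e; have -> : x = y by apply: funext. Qed.

Definition pfree n (phi : ppf R n) (C : lmodType R) (c : 'I_n -> C) : Prop :=
  forall (N : lmodType R) (z : 'I_n -> N), ppsat phi z ->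
    exists f : {linear C -> N}, forall i, f (c i) = z i.

Lemma pfree_le n (phi psi : ppf R n) (C : lmodType R) (c : 'I_n -> C) :
  pfree phi c -> ppsat psi c -> pp_le phi psi.
Proof.
move=> fr hc N z hz; have [f hf] := fr N z hz.
by apply: ppsat_ext hf _; apply: ppsat_lin.
Qed.

Definition psum n (phi psi : ppf R n) : ppf R n :=
  @PPF R n (pp_k phi + pp_k psi) (n + (pp_m phi + pp_m psi))
    (col_mx 0 (pp_A psi))
    (col_mx (row_mx (pp_A phi) (row_mx (pp_B phi) 0))
            (row_mx (- pp_A psi) (row_mx 0 (pp_B psi)))).

Lemma psumP n (phi psi : ppf R n) : pp_is_sum (psum phi psi) phi psi.
Proof.
move=> M x; split.
  move=> /ppsatE [y hy].
  pose x1 := fun i => y (lshift _ i).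
  pose w1 := fun l => y (rshift n (lshift (pp_m psi) l)).
  pose w2 := fun l => y (rshift n (rshift (pp_m phi) l)).
  have ey : y = pcat x1 (pcat w1 w2).
    apply: funext => l; rewrite -(splitK l); case: (split l) => a /=.
      by rewrite pcatL.
    rewrite pcatR -(splitK a); case: (split a) => b /=; by rewrite ?pcatL ?pcatR.
  exists x1, (fun i => x i - x1 i); split; first by move=> i; rewrite addrC subrK.
  split.
    apply/ppsatE; exists w1 => r; have := hy (lshift _ r).
    by rewrite lc_colU lc_colU ey !lc_row lc0 lc0 add0r addr0.
  apply/ppsatE; exists w2 => r; have := hy (rshift _ r).
  rewrite lc_colD lc_colD ey !lc_row lc0 add0r lcN lcxB.
  by rewrite addrA.
move=> [y1 [y2 [ex [/ppsatE [w1 h1] /ppsatE [w2 h2]]]]].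
apply/ppsatE; exists (pcat y1 (pcat w1 w2)) => r; rewrite -(splitK r); case: (split r) => a /=.
  by rewrite lc_colU lc_colU !lc_row lc0 lc0 add0r addr0 h1.
rewrite lc_colD lc_colD !lc_row lc0 add0r lcN.
have -> : x = (fun i => y1 i + y2 i) by apply: funext.
by rewrite lcxD -addrA addrCA addNKr h2.
Qed.

Lemma ppsat_sum n (phi psi chi : ppf R n) (M : lmodType R) (x : 'I_n -> M) :
  pp_le phi chi -> pp_le psi chi -> ppsat (psum phi psi) x -> ppsat chi x.
Proof.
move=> h1 h2 /psumP [x1 [x2 [ex [s1 s2]]]].
by apply: ppsat_ext (fun i => esym (ex i)) _; apply: ppsatD; [apply: h1 | apply: h2].
Qed.
End PPB.

Set Implicit Arguments. Unset Strict Implicit. Unset Printing Implicit Defensive.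


Section Pure.
Variable R : pzRingType.

Lemma cat_split (M : Type) a b (z : 'I_(a + b) -> M) :
  z = pcat (fun i => z (lshift b i)) (fun i => z (rshift a i)).
Proof.
apply: funext => l; rewrite -(splitK l); case: (split l) => c /=.
  by rewrite pcatL.
by rewrite pcatR.
Qed.

Definition kerf n (phi : ppf R n) : ppf R (pp_k phi) :=
  @PPF R (pp_k phi) (pp_k phi) (n + pp_m phi) 1%:M (- row_mx (pp_A phi) (pp_B phi)).

Lemma pure_lift (S M : lmodType R) (p : {linear S -> M}) n (phi : ppf R n) (x : 'I_n -> M) :
  pure_epi p -> ppsat phi x -> exists s, (forall i, p (s i) = x i) /\ ppsat phi s.
Proof.
move=> [surj pure] /ppsatE [y hy].
pose sec m := projT1 (cid (surj m)).
have psec m : p (sec m) = m by rewrite /sec; case: cid.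
pose s := fun i => sec (x i).
pose t := fun l => sec (y l).
pose kk := fun r => lc (pp_A phi) s r + lc (pp_B phi) t r.
have hk : forall r, p (kk r) = 0.
  move=> r; rewrite linearD !lc_lin.
  have -> : (fun i => p (s i)) = x by apply: funext => i; apply: psec.
  have -> : (fun i => p (t i)) = y by apply: funext => i; apply: psec.
  exact: hy.
have sk : ppsat (kerf phi) kk.
  apply/ppsatE; exists (pcat s t) => r.
  by rewrite /= lc1 lcN lc_row subrr.
have [z [pz hz]] := pure _ (kerf phi) kk hk sk.
have hz' : forall r, lc 1%:M kk r + lc (- row_mx (pp_A phi) (pp_B phi)) z r = 0 := hz.
pose u := fun i => z (lshift (pp_m phi) i).
pose v := fun i => z (rshift n i).
have ez : z = pcat u v by apply: cat_split.
exists (fun i => s i - u i); split.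
  by move=> i; rewrite linearB /= psec pz subr0.
apply/ppsatE; exists (fun l => t l - v l) => r.
have := hz' r; rewrite lc1 lcN ez lc_row => /eqP; rewrite subr_eq0 => /eqP e.
by rewrite !lcxB addrACA -/(kk r) e -opprD subrr.
Qed.

Definition ptriv : ppf R 1 := @PPF R 1 0 0 0 0.

Lemma lift_pure (S M : lmodType R) (p : {linear S -> M}) :
  (forall n (phi : ppf R n) (x : 'I_n -> M), ppsat phi x ->
     exists s, (forall i, p (s i) = x i) /\ ppsat phi s) -> pure_epi p.
Proof.
move=> hl; split.
  move=> m; have [|s [hs _]] := hl 1 ptriv (fun _ => m).
    by apply/ppsatE; exists (fun _ => 0) => r; case: r.
  by exists (s ord0); apply: hs.
move=> n phi x hx /ppsatE [y hy].
pose rho := @PPF R (pp_m phi) (pp_k phi) 0 (pp_B phi) (0 : 'M[R]_(pp_k phi, 0)).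
have [|t [pt ht]] := hl _ rho (fun l => p (y l)).
  apply/ppsatE; exists (fun _ => 0) => r; rewrite /= lc_x0 addr0 -lc_lin.
  have := congr1 p (hy r); rewrite linear0 linearD lc_lin.
  have -> : (fun i => p (x i)) = (fun _ => 0) by apply: funext => i; apply: hx.
  by rewrite lc_x0 add0r.
move/ppsatE: ht => [w hw].
exists (fun l => y l - t l); split.
  by move=> l; rewrite linearB /= pt subrr.
move=> r; have := hw r; rewrite /= [lc _ w r]big_ord0 addr0 => e.
have -> : \sum_(j < n) pp_A phi r j *: x j + \sum_(l < pp_m phi) pp_B phi r l *: (y l - t l)
   = lc (pp_A phi) x r + lc (pp_B phi) (fun l => y l - t l) r by [].
by rewrite lcxB e subr0 hy.
Qed.

Lemma id_pure (M : lmodType R) : pure_epi (idfun : {linear M -> M}).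
Proof.
apply: lift_pure => n phi x hx; by exists x.
Qed.

Lemma dsum_pproj (I : Type) (Bi : I -> lmodType R) (S : lmodType R)
    (iota : forall i, {linear Bi i -> S}) :
  (forall i, pure_projective (Bi i)) -> is_dsum iota -> pure_projective S.
Proof.
move=> hB hS S' M p pp f.
have hg : forall i, exists g : {linear Bi i -> S'}, (p \o g) =1 (f \o iota i).
  by move=> i; apply: hB.
pose g i := projT1 (cid (hg i)).
have pg : forall i, (p \o g i) =1 (f \o iota i) by move=> i; rewrite /g; case: cid.
have [[G hG] _] := hS S' g.
exists G.
have [_ uniq] := hS M (fun i => f \o iota i).
apply: (uniq (p \o G) f) => i v /=.
  by have := hG i v; rewrite /= => ->; apply: pg.
by [].
Qed.
End Pure.

Unset Implicit Arguments. Set Strict Implicit. Unset Printing Implicit Defensive.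


Lemma dsum_is_dsum (R : pzRingType) (J : Type) (X : J -> lmodType R) :
  is_dsum (fun j => (@dinj R J X j : {linear _ -> _})).
Proof.
move=> N f; split.
  by exists (dmap f : {linear _ -> _}) => i v /=; apply: dmap_dinj.
move=> g1 g2 h1 h2 v.
rewrite (dmap_unique (F := f) (g := g1)); last by move=> j x; apply: h1.
by rewrite (dmap_unique (F := f) (g := g2)) // => j x; apply: h2.
Qed.

Section Scm.
Variables (R : pzRingType) (M : lmodType R) (v : M).
Definition scm (a : R^o) : M := (a : R) *: v.
Lemma scm_lin : linear scm.
Proof. by move=> c a b; rewrite /scm scalerDl scalerA. Qed.
HB.instance Definition _ := GRing.isLinear.Build R R^o M *:%R scm scm_lin.
End Scm.
Arguments scm {R M} v a.

Section PPgen.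
Variables (R : pzRingType) (D : lmodType R).

Definition PJ := {n' : nat & {e : 'I_n' -> D & {chi : ppf R n' | ppsat chi e}}}.
Definition nj (j : PJ) := projT1 j.
Definition ej (j : PJ) : 'I_(nj j) -> D := projT1 (projT2 j).
Definition chij (j : PJ) : ppf R (nj j) := proj1_sig (projT2 (projT2 j)).
Lemma chiP (j : PJ) : ppsat (chij j) (ej j).
Proof. exact: (proj2_sig (projT2 (projT2 j))). Qed.
Definition Nj (j : PJ) := nj j + pp_m (chij j).
Definition wj (j : PJ) : 'I_(pp_m (chij j)) -> D := projT1 (cid (chiP j)).
Lemma wjP j r : lc (pp_A (chij j)) (ej j) r + lc (pp_B (chij j)) (wj j) r = 0.
Proof. by rewrite /wj; case: cid => w hw; apply: hw. Qed.
Definition valj (j : PJ) : 'I_(Nj j) -> D := pcat (ej j) (wj j).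

Definition PX := {j : PJ & 'I_(Nj j)}.
Definition Fr := @dsum R PX (fun _ => R^o).
Definition basis (x : PX) : Fr := @dinj R PX (fun _ => R^o) x (1 : R^o).
Definition relv (j : PJ) (r : 'I_(pp_k (chij j))) : Fr :=
  lc (row_mx (pp_A (chij j)) (pp_B (chij j))) (fun i => basis (Tagged (fun j => 'I_(Nj j)) i)) r.

Definition Urel (v : Fr) : Prop :=
  forall (N : lmodType R) (h : {linear Fr -> N}), (forall j r, h (relv j r) = 0) -> h v = 0.
Lemma Urel0 : Urel 0.
Proof. by move=> N h _; rewrite linear0. Qed.
Lemma UrelP a u v : Urel u -> Urel v -> Urel (a *: u + v).
Proof. by move=> hu hv N h hh; rewrite linearP /= hu // hv // scaler0 addr0. Qed.
Definition Us : subm Fr := Subm Urel0 UrelP.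
Definition T := quot Us.

Definition q0 : {linear Fr -> D} :=
  dmap (fun x : PX => (scm (valj (tag x) (tagged x)) : {linear R^o -> D})).

Lemma q0_basis x : q0 (basis x) = valj (tag x) (tagged x).
Proof. rewrite /q0 /basis /=. rewrite dmap_dinj /= /scm scale1r. by []. Qed.

Lemma q0_relv j r : q0 (relv j r) = 0.
Proof.
rewrite /relv lc_lin.
have -> : (fun i => q0 (basis (Tagged (fun j => 'I_(Nj j)) i))) = valj j.
  by apply: funext => i; rewrite q0_basis.
by rewrite /valj lc_row wjP.
Qed.

Lemma q0U u : Us u -> q0 u = 0.
Proof. by move=> hu; apply: hu => j r; apply: q0_relv. Qed.

Definition q : {linear T -> D} := qmap q0U.

Lemma q_pi v : q (qpi Us v) = q0 v.
Proof. exact: qmap_pi. Qed.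

Lemma q_pure : pure_epi q.
Proof.
apply: lift_pure => n' phi x hx.
pose j : PJ := existT _ n' (existT _ x (exist _ phi hx)).
exists (fun i : 'I_n' => qpi Us (basis (Tagged (fun j => 'I_(Nj j)) (lshift (pp_m (chij j)) (i : 'I_(nj j)))))).
split.
  by move=> i; rewrite q_pi q0_basis /= /valj pcatL.
apply/ppsatE.
exists (fun l : 'I_(pp_m phi) => qpi Us (basis (Tagged (fun j => 'I_(Nj j)) (rshift (nj j) (l : 'I_(pp_m (chij j))))))).
move=> r; rewrite -!(lc_lin (qpi Us : {linear _ -> _})) -linearD.
apply/qpi0.
have hr : Us (relv j r) by move=> N h hh; apply: hh.
have e := (@cat_split _ (nj j) (pp_m (chij j)) (fun i => basis (Tagged (fun j => 'I_(Nj j)) i))).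
by move: hr; rewrite /relv e lc_row.
Qed.

Lemma coord_relv (x : PX) j r : tag x <> j -> dcoord x (relv j r) = 0.
Proof.
move=> nx; rewrite /relv (lc_lin (dcoord x : {linear _ -> _})).
have -> : (fun i : 'I_(Nj j) => dcoord x (basis (Tagged (fun j => 'I_(Nj j)) i))) = (fun _ => (0 : R^o)).
  apply: funext => i; rewrite /basis coord_dinj_neq // => e.
  by apply: nx; rewrite -e.
exact: lc_x0.
Qed.

Lemma flat_memP (A B : eqType) (L : seq A) (F : A -> seq B) (x : B) :
  reflect (exists2 a, a \in L & x \in F a) (x \in flatten [seq F a | a <- L]).
Proof.
apply: (iffP flattenP) => [[s /mapP [a aL ->] xs]|[a aL xa]]; first by exists a.
by exists (F a) => //; apply: map_f.
Qed.
Arguments flat_memP {A B L F x}.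

Lemma PPgen n (phi : ppf R n) (d : 'I_n -> D) : pure_projective D -> ppsat phi d ->
  exists psi : ppf R n, ppsat psi d /\ pfree psi d /\ pp_le psi phi.
Proof.
move=> hD hd.
have [g hg] := hD _ _ q q_pure (idfun : {linear D -> D}).
pose fk := fun k => qval (g (d k)).
have hfk : forall k, q0 (fk k) = d k.
  by move=> k; rewrite -q_pi /fk qpiK; exact: hg (d k).
pose JG : seq {classic PJ} :=
  undup [seq (tag x : {classic PJ}) | x : {classic PX} <- flatten [seq dsupp (fk k) | k <- enum 'I_n]].
pose W : seq Fr := flatten [seq [seq relv j r | r <- enum 'I_(pp_k (chij j))] | j : {classic PJ} <- JG].
pose L : seq Fr := [seq fk k | k <- enum 'I_n] ++ W.
pose G' : seq {classic PX} := undup (flatten [seq dsupp v | v <- L]).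
pose gen := fun p : 'I_(size G') => tnth (in_tuple G') p.
pose WM := \matrix_(rho < size W, p < size G') (dcoord (gen p) (nth 0 W rho) : R).
pose FM := \matrix_(k < n, p < size G') (dcoord (gen p) (fk k) : R).
have uG : uniq G' by apply: undup_uniq.
have suppG : forall v, v \in L -> forall x : {classic PX}, dcoord x v != 0 -> x \in G'.
  move=> v vL x nz; rewrite mem_undup; apply/flat_memP; exists v => //.
  by rewrite mem_dsupp.
have fkL : forall k, fk k \in L.
  by move=> k; rewrite mem_cat; apply/orP; left; apply: map_f; rewrite mem_enum.
have WL : forall v, v \in W -> v \in L.
  by move=> v vW; rewrite mem_cat vW orbT.
have Wrel : forall v, v \in W -> exists j r, (j : {classic PJ}) \in JG /\ v = relv j r.
  move=> v; rewrite /W => /flat_memP [j jJ /mapP [r _ ->]]; by exists j, r.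
have dsumG : forall (N : lmodType R) (F : forall x : PX, {linear R^o -> N}) v, v \in L ->
    dmap F v = \sum_(p < size G') F (gen p) (dcoord (gen p) v).
  move=> N F v vL; rewrite (dmap_seq F (s := G') uG); last exact: suppG.
  by rewrite big_tnth.
have q0L : forall v, v \in L -> q0 v = \sum_(p < size G') (dcoord (gen p) v : R) *: q0 (basis (gen p)).
  move=> v vL; rewrite /q0 /= dsumG //; apply: eq_bigr => p _.
  by rewrite q0_basis.
exists (@PPF R n (size W + n) (size G') (col_mx 0 1%:M) (col_mx WM (- FM))).
have psid : ppsat (@PPF R n (size W + n) (size G') (col_mx 0 1%:M) (col_mx WM (- FM))) d.
  apply/ppsatE; exists (fun p => q0 (basis (gen p))) => r.
  rewrite -(splitK r); case: (split r) => a /=.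
    rewrite lc_colU lc_colU lc0 add0r.
    have aW : nth 0 W a \in W by apply: mem_nth.
    have [j [r' [_ e]]] := Wrel _ aW.
    rewrite -(q0_relv j r') -e q0L; last exact: WL.
    by apply: eq_bigr => p _; rewrite mxE.
  rewrite lc_colD lc_colD lc1 lcN -(hfk a) q0L //; apply/eqP; rewrite subr_eq0; apply/eqP.
  by apply: eq_bigr => p _; rewrite mxE.
split => //.
have fr : pfree (@PPF R n (size W + n) (size G') (col_mx 0 1%:M) (col_mx WM (- FM))) d.
  move=> N z /ppsatE [y' hy'].
  pose yfun := fun x : PX => \sum_(p < size G' | gen p == x) y' p.
  have yfun_gen : forall p, yfun (gen p) = y' p.
    move=> p; rewrite /yfun (bigD1 p) //= big1 => [|p' /andP [/eqP e ne]].
      by rewrite addr0.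
    have inj : injective gen by apply/tuple_uniqP.
    by move: ne; rewrite (inj _ _ e) eqxx.
  have yfun_out : forall x : {classic PX}, x \notin G' -> yfun x = 0.
    move=> x xG; apply: big1 => p /eqP e; move: xG; rewrite -e.
    by rewrite /gen mem_tnth.
  pose H0 : {linear Fr -> N} := dmap (fun x : PX => (scm (yfun x) : {linear R^o -> N})).
  have H0_basis : forall x, H0 (basis x) = yfun x.
    move=> x; rewrite /H0 /= /basis dmap_dinj /= /scm scale1r; by [].
  have H0L : forall v, v \in L -> H0 v = \sum_(p < size G') (dcoord (gen p) v : R) *: y' p.
    move=> v vL; rewrite /H0 /= dsumG //; apply: eq_bigr => p _.
    by rewrite /scm /= yfun_gen.
  have tagG : forall x : {classic PX}, x \in G' -> (tag x : {classic PJ}) \in JG.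
    move=> x; rewrite mem_undup => /flat_memP [v]; rewrite mem_cat => /orP [].
      move=> /mapP [k _ ->] xs; rewrite mem_undup; apply/mapP; exists x => //.
      by apply/flat_memP; exists k; [rewrite mem_enum | exact: xs].
    move=> vW; have [j [r [jJ ->]]] := Wrel _ vW.
    rewrite mem_dsupp => nz.
    case: (pselect (tag x = j)) => [-> //|ne].
    by move: nz; rewrite coord_relv // eqxx.
  have H0_relv : forall j r, H0 (relv j r) = 0.
    move=> j r; case: (boolP ((j : {classic PJ}) \in JG)) => hj.
      have rW : relv j r \in W.
        by apply/flat_memP; exists j => //; apply: map_f; rewrite mem_enum.
      have ilt : (index (relv j r) W < size W)%N by rewrite index_mem.
      have := hy' (lshift n (Ordinal ilt)).
      rewrite /= lc_colU lc_colU lc0 add0r => <-.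
      rewrite -{1}(nth_index 0 rW) H0L; last by apply: WL; apply: mem_nth.
      by apply: eq_bigr => p _; rewrite mxE.
    rewrite /relv (lc_lin H0).
    have -> : (fun i : 'I_(Nj j) => H0 (basis (Tagged (fun j => 'I_(Nj j)) i))) = (fun _ => 0).
      apply: funext => i; rewrite H0_basis yfun_out //.
      by apply: contra hj => /tagG.
    exact: lc_x0.
  have hH0 : forall u, Us u -> H0 u = 0 by move=> u hu; apply: hu.
  exists ((qmap hH0 : {linear T -> N}) \o g) => k.
  apply: (@eq_trans _ _ (qmap hH0 (qpi Us (fk k)))); first by rewrite /fk qpiK.
  rewrite qmap_pi H0L //.
  have := hy' (rshift (size W) k); rewrite /= lc_colD lc_colD lc1 lcN => /eqP.
  rewrite subr_eq0 => /eqP ->.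
  by apply: eq_bigr => p _; rewrite mxE.
split => //.
exact: pfree_le fr hd.
Qed.
End PPgen.

Unset Implicit Arguments. Set Strict Implicit. Unset Printing Implicit Defensive.


Section Main.
Variables (R : pzRingType) (B : modclass R).

Set Implicit Arguments.
Record GoodData n (psi : ppf R n) := GD {
  gd_I : Type;
  gd_B : gd_I -> lmodType R;
  gd_S : lmodType R;
  gd_iota : forall i, {linear gd_B i -> gd_S};
  gd_hB : forall i, B (gd_B i);
  gd_ds : is_dsum gd_iota;
  gd_c : 'I_n -> gd_S;
  gd_sat : ppsat psi gd_c;
  gd_free : pfree psi gd_c }.
Unset Implicit Arguments.
Arguments GoodData {n} psi.

Definition Good n (psi : ppf R n) : Prop := exists g : GoodData psi, True.
Arguments Good {n} psi.

Section Sum.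
Variables (n : nat) (psi1 psi2 : ppf R n) (g1 : GoodData psi1) (g2 : GoodData psi2).
Definition sI := (gd_I g1 + gd_I g2)%type.
Definition sB (i : sI) : lmodType R :=
  match i with inl a => gd_B g1 a | inr b => gd_B g2 b end.
Definition sS : lmodType R := dsum sB.
Definition sfam1 (a : gd_I g1) : {linear gd_B g1 a -> sS} := (@dinj R sI sB (inl a) : {linear sB (inl a) -> sS}).
Definition sfam2 (b : gd_I g2) : {linear gd_B g2 b -> sS} := (@dinj R sI sB (inr b) : {linear sB (inr b) -> sS}).
Definition sh1 : {linear gd_S g1 -> sS} := projT1 (cid (proj1 (gd_ds g1 sfam1))).
Definition sh2 : {linear gd_S g2 -> sS} := projT1 (cid (proj1 (gd_ds g2 sfam2))).
Lemma sh1P a v : sh1 (gd_iota g1 a v) = dinj (X := sB) (j := inl a) v.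
Proof. by rewrite /sh1; case: cid => h hh /=; apply: (hh a v). Qed.
Lemma sh2P b v : sh2 (gd_iota g2 b v) = dinj (X := sB) (j := inr b) v.
Proof. by rewrite /sh2; case: cid => h hh /=; apply: (hh b v). Qed.

Lemma Good_sum : Good (psum psi1 psi2).
Proof.
have sat : ppsat (psum psi1 psi2) (fun k => sh1 (gd_c g1 k) + sh2 (gd_c g2 k)).
  apply/psumP; exists (fun k => sh1 (gd_c g1 k)), (fun k => sh2 (gd_c g2 k)).
  split => //; split; apply: ppsat_lin; [exact: gd_sat g1 | exact: gd_sat g2].
have fr : pfree (psum psi1 psi2) (fun k => sh1 (gd_c g1 k) + sh2 (gd_c g2 k)).
  move=> N z /psumP [z1 [z2 [ez [s1 s2]]]].
  have [f1 hf1] := gd_free g1 s1.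
  have [f2 hf2] := gd_free g2 s2.
  pose G : {linear sS -> N} := dmap (fun i : sI => match i as i0 return {linear sB i0 -> N} with
     | inl a => (f1 \o gd_iota g1 a : {linear _ -> _})
     | inr b => (f2 \o gd_iota g2 b : {linear _ -> _}) end).
  have G1 : forall v, G (sh1 v) = f1 v.
    have [_ un] := gd_ds g1 (fun a => (f1 \o gd_iota g1 a : {linear _ -> _})).
    apply: (un (G \o sh1) f1) => a v /=; last by [].
    by rewrite sh1P /G dmap_dinj.
  have G2 : forall v, G (sh2 v) = f2 v.
    have [_ un] := gd_ds g2 (fun b => (f2 \o gd_iota g2 b : {linear _ -> _})).
    apply: (un (G \o sh2) f2) => b v /=; last by [].
    by rewrite sh2P /G dmap_dinj.
  exists G => k; rewrite linearD /= G1 G2 hf1 hf2; exact: esym (ez k).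
exists (@GD _ _ sI sB sS (fun i => @dinj R sI sB i : {linear _ -> _})
         (fun i => match i with inl a => gd_hB g1 a | inr b => gd_hB g2 b end)
         (@dsum_is_dsum R sI sB) _ sat fr).
by [].
Qed.
End Sum.

Hypothesis hBpp : forall P, B P -> pure_projective P.

Definition famI n (phi : ppf R n) := {psi : ppf R n | pp_le psi phi /\ Good psi}.

Lemma fam_closed n (phi : ppf R n) : forall i j : famI n phi, exists k : famI n phi,
  pp_is_sum (proj1_sig k) (proj1_sig i) (proj1_sig j).
Proof.
move=> [p1 h1] [p2 h2] /=; case: h1 => l1 [g1 _]; case: h2 => l2 [g2 _].
have le : pp_le (psum p1 p2) phi by move=> M x; apply: ppsat_sum.
exists (exist _ (psum p1 p2) (conj le (Good_sum _ _ _ g1 g2))) => /=; exact: psumP.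
Qed.

Definition ax n (phi : ppf R n) : Fconcl R n :=
  @FConcl R n (famI n phi) (fun i => proj1_sig i) (@fam_closed n phi).

Section Back.
Variables (M : lmodType R) (hM : forall n (phi : ppf R n), Fsat phi (ax n phi) M).

Definition BJ := {n : nat & {x : 'I_n -> M & {phi : ppf R n | ppsat phi x}}}.
Definition bn (j : BJ) := projT1 j.
Definition bx (j : BJ) : 'I_(bn j) -> M := projT1 (projT2 j).
Definition bphi (j : BJ) : ppf R (bn j) := proj1_sig (projT2 (projT2 j)).
Lemma bP (j : BJ) : ppsat (bphi j) (bx j).
Proof. exact: (proj2_sig (projT2 (projT2 j))). Qed.
Definition bi (j : BJ) : famI (bn j) (bphi j) := projT1 (cid (hM _ _ _ (bP j))).
Lemma biP j : ppsat (proj1_sig (bi j)) (bx j).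
Proof. by rewrite /bi; case: cid. Qed.
Definition bg (j : BJ) : GoodData (proj1_sig (bi j)) :=
  projT1 (cid (proj2 (proj2_sig (bi j)))).
Definition bf (j : BJ) : {linear gd_S (bg j) -> M} :=
  projT1 (cid (gd_free (bg j) (biP j))).
Lemma bfP j k : bf j (gd_c (bg j) k) = bx j k.
Proof. by rewrite /bf; case: cid. Qed.
Definition BK := {j : BJ & gd_I (bg j)}.
Definition BB (k : BK) : lmodType R := gd_B (bg (tag k)) (tagged k).
Definition BT : lmodType R := dsum BB.
Definition bp : {linear BT -> M} :=
  dmap (fun k : BK => (bf (tag k) \o gd_iota (bg (tag k)) (tagged k) : {linear _ -> _})).

Lemma back : PGen B M.
Proof.
exists BK, BB, BT, (fun k => (@dinj R BK BB k : {linear _ -> _})).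
split; first by move=> k; exact: gd_hB.
split; first exact: dsum_is_dsum.
exists bp; apply: lift_pure => n phi x hx.
pose j : BJ := existT _ n (existT _ x (exist _ phi hx)).
pose fam := fun i : gd_I (bg j) => (@dinj R BK BB (existT _ j i) : {linear BB (existT _ j i) -> BT}).
have [[h hh] _] := gd_ds (bg j) fam.
have ph : forall v, bp (h v) = bf j v.
  have [_ un] := gd_ds (bg j) (fun i => (bf j \o gd_iota (bg j) i : {linear _ -> _})).
  apply: (un (bp \o h) (bf j)) => i v /=; last by [].
  have e := hh i v; rewrite /= in e; by rewrite e /bp dmap_dinj.
exists (fun k => h (gd_c (bg j) k)); split.
  by move=> k; rewrite ph bfP.
apply: ppsat_lin; apply: (proj1 (proj2_sig (bi j))); exact: gd_sat.
Qed.
End Back.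
End Main.

Theorem lemma3p10 (R : pzRingType) (F : modclass R) :
  purely_resolving F -> special_Fclass F.
Proof.
move=> [B [hBpp [_ hFB]]].
have GoodF : forall n (psi : ppf R n) (g : GoodData B psi), F (gd_S g).
  move=> n psi g; apply/hFB; exists (gd_I g), (gd_B g), (gd_S g), (gd_iota g).
  split; first exact: gd_hB.
  split; first exact: gd_ds.
  by exists (idfun : {linear _ -> _}); apply: id_pure.
exists (ax R B).
split; first by move=> n phi [psi h]; exact: (proj1 h).
split.
  move=> M; split.
    move=> /hFB [I [Bi [S [iota [hB [hds [p pp]]]]]]] n phi x hx.
    have [s [ps hs]] := pure_lift pp hx.
    have hS : pure_projective S := dsum_pproj (fun i => hBpp _ (hB i)) hds.
    have [psi [sat [fr le]]] := PPgen _ _ _ _ _ hS hs.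
    pose g := @GD R B n psi I Bi S iota hB hds s sat fr.
    exists (exist _ psi (conj le (ex_intro _ g Logic.I))) => /=.
    by apply: ppsat_ext ps _; apply: ppsat_lin.
  by move=> hM; apply/hFB; apply: back.
move=> n phi psi hle [psi' h] /=; case: h => le [g _].
have le' : pp_le psi' psi.
  apply: (pfree_le (gd_free g)); apply: hle; first exact: GoodF g.
  by apply: le; exact: gd_sat.
by exists (exist _ psi' (conj le' (ex_intro _ g Logic.I))) => /= M x.
Qed.
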